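(* Let $c>1$ and $d>1$ be irrational numbers, let $c'_n=[c^{-1}n]$, let $k$ be a nonnegative integer, and for a positive integer $m$ let $x=[cm]$. Then, as $m\to\infty$, \begin{align*} \int_1^x \frac{[d^{-1}([c^{-1}([t]+1)]+k+1)]}{t^2}\,dt =\;& (cd)^{-1}(\log m + \log c + \gamma)+d^{-1}(k+1)\\ & -\sum_{n=1}^\infty \frac{d^{-1}\{c^{-1}(n+1)\}+\{d^{-1}(c'_{n+1}+k+1)\}}{n(n+1)} + O\left(\frac{1}{m}\right), \end{align*} where $\gamma$ is Euler's constant.
   Context: $[x]$ is the greatest integer not exceeding $x$ and $\{x\}=x-[x]$. The implied constant may depend on $c,d,k$. *)

(* Defs.v *)
From Stdlib Require Import Reals Lra ZArith.
From Coquelicot Require Import Coquelicot.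
Open Scope R_scope.

Definition flr (x : R) : R := IZR (Int_part x).

Definition frac (x : R) : R := x - flr x.

Definition irrational (x : R) : Prop :=
  forall (p : Z) (q : positive), x <> IZR p / IZR (Zpos q).

Definition euler_gamma : R :=
  real (Lim_seq (fun n : nat => sum_n_m (fun j : nat => / INR j) 1 n - ln (INR n))).

Definition cprime (c : R) (n : nat) : R := flr (/ c * INR n).

(* Main.v *)
Require Import Defs.
From Stdlib Require Import Reals Lra Lia ZArith.
From Coquelicot Require Import Coquelicot.
Open Scope R_scope.

Lemma flr_spec x : flr x <= x /\ x - 1 < flr x.
Proof. unfold flr; destruct (base_Int_part x); lra. Qed.

Lemma flr_nat n t : INR n <= t < INR n + 1 -> flr t = INR n.
Proof.
  intros H. unfold flr. rewrite INR_IZR_INZ. f_equal. symmetry.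
  apply Int_part_spec. rewrite <- INR_IZR_INZ. lra.
Qed.

Lemma ln_le_sub1 y : 0 < y -> ln y <= y - 1.
Proof. intros H. pose proof (exp_ineq1_le (ln y)). rewrite exp_ln in H0; lra. Qed.

Fixpoint psum (a : nat -> R) (n : nat) : R :=
  match n with O => 0 | S n => psum a n + a n end.

Lemma psum_sum_f a n : psum a (S n) = sum_f_R0 a n.
Proof. induction n; simpl in *; lra. Qed.

Lemma sum_n_psum (a : nat -> R) n : sum_n a n = psum a (S n).
Proof. induction n. rewrite sum_O; simpl; lra.
  rewrite sum_Sn, IHn. simpl. reflexivity. Qed.

Definition Hh n := psum (fun i => / INR (S i)) n.

Lemma H_sum n : sum_n_m (fun j => / INR j) 1 n = Hh n.
Proof.
  induction n. rewrite sum_n_m_zero by lia. reflexivity.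
  rewrite sum_n_Sm by lia. rewrite IHn. reflexivity.
Qed.

Lemma H_S m : Hh (S m) = Hh m + / (INR m + 1).
Proof. unfold Hh. change (psum (fun i => / INR (S i)) m + / INR (S m) = psum (fun i => / INR (S i)) m + / (INR m + 1)). rewrite S_INR. reflexivity. Qed.

Lemma INRp n : (1 <= n)%nat -> 0 < INR n.
Proof. intros. apply lt_0_INR; lia. Qed.

Lemma H_dec n p : (1 <= n)%nat -> Hh (n + p) - ln (INR (n + p)) <= Hh n - ln (INR n).
Proof.
  intros Hn. induction p. rewrite Nat.add_0_r; lra.
  rewrite Nat.add_succ_r. rewrite H_S.
  set (m := (n + p)%nat) in *. assert (H0 : 0 < INR m) by (apply INRp; lia).
  rewrite S_INR.
  pose proof (ln_le_sub1 (INR m / (INR m + 1))) as H1.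
  assert (0 < INR m / (INR m + 1)) by (apply Rdiv_lt_0_compat; lra).
  rewrite ln_div in H1 by lra.
  assert (INR m / (INR m + 1) - 1 = - / (INR m + 1)) by (field; lra).
  lra.
Qed.

Lemma H_inc n p : Hh n - ln (INR n + 1) <= Hh (n + p) - ln (INR (n + p) + 1).
Proof.
  induction p. rewrite Nat.add_0_r; lra.
  rewrite Nat.add_succ_r. rewrite H_S.
  set (m := (n + p)%nat) in *. pose proof (pos_INR m) as H0.
  rewrite !S_INR.
  pose proof (ln_le_sub1 ((INR m + 1 + 1) / (INR m + 1))) as H1.
  assert (0 < (INR m + 1 + 1) / (INR m + 1)) by (apply Rdiv_lt_0_compat; lra).
  rewrite ln_div in H1 by lra.
  assert ((INR m + 1 + 1) / (INR m + 1) - 1 = / (INR m + 1)) by (field; lra).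
  lra.
Qed.

Lemma gamma_bounds n : (1 <= n)%nat ->
  Hh n - ln (INR n + 1) <= euler_gamma <= Hh n - ln (INR n).
Proof.
  intros Hn. unfold euler_gamma.
  set (u := fun n0 : nat => sum_n_m (fun j : nat => / INR j) 1 n0 - ln (INR n0)).
  assert (A : Rbar_le (Lim_seq u) (Hh n - ln (INR n))).
  { rewrite <- (Lim_seq_const (Hh n - ln (INR n))). apply Lim_seq_le_loc.
    exists n. intros m Hm. unfold u. rewrite H_sum.
    replace m with (n + (m - n))%nat by lia. apply H_dec; auto. }
  assert (B : Rbar_le (Hh n - ln (INR n + 1)) (Lim_seq u)).
  { rewrite <- (Lim_seq_const (Hh n - ln (INR n + 1))). apply Lim_seq_le_loc.
    exists n. intros m Hm. unfold u. rewrite H_sum.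
    replace m with (n + (m - n))%nat by lia.
    pose proof (H_inc n (m - n)). set (q := (n + (m - n))%nat) in *.
    assert (ln (INR q) <= ln (INR q + 1)). { apply ln_le. apply INRp; lia. lra. }
    lra. }
  destruct (Lim_seq u); simpl in *; lra.
Qed.

Section S.
Variables (c d : R) (k : nat).

Definition ff (n : nat) : R := flr (/ d * (flr (/ c * (INR n + 1)) + INR k + 1)).
Definition FF (t : R) : R := flr (/ d * (flr (/ c * (flr t + 1)) + INR k + 1)) / t ^ 2.

Lemma piece n : (1 <= n)%nat ->
  is_RInt FF (INR n) (INR n + 1) (ff n * (/ INR n - / (INR n + 1))).
Proof.
  intros Hn. assert (0 < INR n) by (apply INRp; lia).
  apply is_RInt_ext with (fun t => ff n / t ^ 2).
  { rewrite Rmin_left, Rmax_right by lra. intros t Ht.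
    unfold FF, ff. rewrite (flr_nat n t) by lra. reflexivity. }
  replace (ff n * (/ INR n - / (INR n + 1))) with
    (minus ((fun t => - ff n / t) (INR n + 1)) ((fun t => - ff n / t) (INR n))).
  2:{ unfold minus, plus, opp; simpl. field. lra. }
  apply (is_RInt_derive (fun t => - ff n / t)).
  - rewrite Rmin_left, Rmax_right by lra. intros t Ht.
    auto_derive. lra. field. lra.
  - rewrite Rmin_left, Rmax_right by lra. intros t Ht.
    apply (ex_derive_continuous (fun t => ff n / t ^ 2)). auto_derive. apply Rmult_integral_contrapositive_currified; [lra|]. rewrite Rmult_1_r; lra.
Qed.

Definition AA (j : nat) : R := ff (S j) * (/ INR (S j) - / INR (S (S j))).

Lemma integ n : is_RInt FF 1 (INR (S n)) (psum AA n).
Proof.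
  induction n.
  - simpl. exact (is_RInt_point FF 1).
  - assert (Hp : is_RInt FF (INR (S n)) (INR (S (S n))) (AA n)).
    { rewrite (S_INR (S n)). unfold AA. rewrite (S_INR (S n)).
      apply piece. lia. }
    exact (is_RInt_Chasles FF _ _ _ _ _ IHn Hp).
Qed.

End S.

Definition aa (c d : R) (k : nat) : nat -> R := fun j : nat =>
                  let n := S j in
                  (/ d * frac (/ c * (INR n + 1))
                   + frac (/ d * (cprime c (S n) + INR k + 1)))
                  / (INR n * (INR n + 1)).

Lemma decomp c d k j : 0 < c -> 0 < d ->
  AA c d k j = / (c * d) * / INR (S j) + / d * (INR k + 1) * (/ INR (S j) - / INR (S (S j))) - aa c d k j.
Proof.
  intros Hc Hd. unfold AA, aa, ff, frac, cprime.
  rewrite (S_INR (S j)).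
  set (u := INR (S j)). assert (0 < u) by (apply INRp; lia).
  set (p := flr (/ c * (u + 1))).
  set (q := flr (/ d * (p + INR k + 1))).
  field. lra.
Qed.

Lemma closed_form c d k n : 0 < c -> 0 < d ->
  psum (AA c d k) n = / (c * d) * Hh n + / d * (INR k + 1) * (1 - / INR (S n)) - psum (aa c d k) n.
Proof.
  intros Hc Hd. induction n.
  - simpl. unfold Hh; simpl. field. lra.
  - simpl psum at 1. rewrite IHn, decomp by auto. rewrite H_S.
    change (psum (aa c d k) (S n)) with (psum (aa c d k) n + aa c d k n).
    rewrite <- (S_INR n). lra.
Qed.

Lemma aa_bounds c d k j : 0 < c -> 1 < d ->
  0 <= aa c d k j <= 2 * (/ INR (S j) - / INR (S (S j))).
Proof.
  intros Hc Hd. unfold aa, frac.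
  rewrite (S_INR (S j)).
  set (u := INR (S j)). assert (0 < u) by (apply INRp; lia).
  set (x := / c * (u + 1)). set (y := / d * (cprime c (S (S j)) + INR k + 1)).
  destruct (flr_spec x), (flr_spec y).
  assert (0 < / d < 1). { split. apply Rinv_0_lt_compat; lra.
    rewrite <- Rinv_1. apply Rinv_lt_contravar; lra. }
  assert (E : 2 * (/ u - / (u + 1)) = 2 / (u * (u + 1))) by (field; lra).
  rewrite E. assert (0 < u * (u + 1)) by nra.
  unfold Rdiv. split.
  - apply Rmult_le_pos. nra. left; apply Rinv_0_lt_compat; lra.
  - apply Rmult_le_compat_r. left; apply Rinv_0_lt_compat; lra. nra.
Qed.

Lemma tele K : (1 <= K)%nat ->
  is_series (fun j => 2 * (/ INR (K + j) - / INR (S (K + j)))) (2 / INR K).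
Proof.
  intros HK.
  assert (Hs : forall n, @eq R (sum_n (fun j => 2 * (/ INR (K + j) - / INR (S (K + j)))) n)
                (2 / INR K - 2 * / INR (S (K + n)))).
  { intros n. rewrite sum_n_psum. induction n.
    - simpl. rewrite Nat.add_0_r. unfold Rdiv. ring.
    - change (psum (fun j => 2 * (/ INR (K + j) - / INR (S (K + j)))) (S (S n)))
        with (psum (fun j => 2 * (/ INR (K + j) - / INR (S (K + j)))) (S n) + 2 * (/ INR (K + S n) - / INR (S (K + S n)))).
      rewrite IHn, Nat.add_succ_r. ring. }
  assert (L : is_lim_seq (fun n => 2 / INR K - 2 * / INR (S (K + n))) (2 / INR K - 2 * 0)).
  { apply is_lim_seq_minus'. apply is_lim_seq_const.
    replace (Finite (2 * 0)) with (Rbar_mult 2 (Rbar_inv p_infty)) by (simpl; f_equal; ring).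
    apply is_lim_seq_scal_l. apply is_lim_seq_inv; [|discriminate].
    apply is_lim_seq_ext with (fun n => INR (n + S K)).
    { intros n; f_equal; lia. }
    apply (is_lim_seq_incr_n INR (S K)). apply is_lim_seq_INR. }
  replace (2 / INR K) with (2 / INR K - 2 * 0) by ring.
  apply is_lim_seq_ext with (v := sum_n (fun j => 2 * (/ INR (K + j) - / INR (S (K + j))))) in L.
  2:{ intros n; rewrite Hs; reflexivity. }
  exact L.
Qed.

Theorem lemma10 (c d : R) (k : nat) :
  1 < c -> 1 < d -> irrational c -> irrational d ->
  exists (C : R) (M : nat), forall m : nat, (1 <= m)%nat -> (M <= m)%nat ->
    let x := flr (c * INR m) in
    Rabs (RInt (fun t => flr (/ d * (flr (/ c * (flr t + 1)) + INR k + 1)) / t ^ 2) 1 x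
          - ( / (c * d) * (ln (INR m) + ln c + euler_gamma) + / d * (INR k + 1)
              - Series (fun j : nat =>
                  let n := S j in
                  (/ d * frac (/ c * (INR n + 1))
                   + frac (/ d * (cprime c (S n) + INR k + 1)))
                  / (INR n * (INR n + 1)))))
      <= C / INR m.
Proof.
  intros Hc Hd _ _. exists (INR k + 6), 2%nat. intros m Hm1 Hm2 x.
  assert (Hm : 2 <= INR m) by (apply (le_INR 2); lia).
  destruct (flr_spec (c * INR m)) as [Fx1 Fx2].
  assert (Hcm : INR m < c * INR m) by nra.
  assert (Hz : INR m <= flr (c * INR m)).
  { unfold flr in *. rewrite INR_IZR_INZ in *. apply IZR_le.
    assert (IZR (Z.of_nat m - 1) < IZR (Int_part (c * IZR (Z.of_nat m)))).
    { rewrite minus_IZR. simpl. lra. }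
    apply lt_IZR in H. lia. }
  assert (HN : exists N : nat, flr (c * INR m) = INR N).
  { exists (Z.to_nat (Int_part (c * INR m))). rewrite (INR_IZR_INZ (Z.to_nat _)), Z2Nat.id.
    reflexivity. apply le_IZR. fold (flr (c * INR m)). pose proof (pos_INR m). lra. }
  destruct HN as [N HN].
  assert (HmN : (m <= N)%nat) by (apply INR_le; lra).
  destruct N as [|[|q]]; [lia|lia|].
  set (p := S q) in *.
  assert (Hx : x = INR (S p)) by (unfold x; rewrite HN; reflexivity).
  replace (RInt _ 1 x) with (psum (AA c d k) p).
  2:{ rewrite Hx. symmetry. apply is_RInt_unique. exact (integ c d k p). }
  rewrite closed_form by lra.
  change (Series (fun j : nat => let n := S j in _)) with (Series (aa c d k)).
  assert (Hb : forall j, 0 <= aa c d k j <= 2 * (/ INR (S j) - / INR (S (S j))))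
    by (intros; apply aa_bounds; lra).
  assert (Hex : ex_series (aa c d k)).
  { apply (@ex_series_le R_AbsRing R_CompleteNormedModule) with (fun j => 2 * (/ INR (1 + j) - / INR (S (1 + j)))).
    - intros j. change (norm (aa c d k j)) with (Rabs (aa c d k j)).
      rewrite Rabs_pos_eq by apply Hb. apply Hb.
    - exists (2 / INR 1). apply tele. lia. }
  rewrite (Series_incr_n (aa c d k) p) by (unfold p; lia || auto).
  unfold p at 1. simpl pred. rewrite <- psum_sum_f. fold p.
  set (T := Series (fun k0 => aa c d k (p + k0))).
  assert (HT : 0 <= T <= 2 / INR (S p)).
  { split.
    - replace 0 with (Series (fun j => 0 * aa c d k (p + j))).
      2:{ rewrite Series_scal_l. ring. }
      apply Series_le.
      + intros; rewrite Rmult_0_l; split; [lra|apply Hb].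
      + apply ex_series_incr_n; auto.
    - rewrite <- (is_series_unique _ _ (tele (S p) ltac:(lia))).
      apply Series_le. intros j. apply (Hb (p + j)%nat).
      exists (2 / INR (S p)). apply tele; lia. }
  pose proof (gamma_bounds p ltac:(unfold p; lia)) as G.
  assert (Hp : 1 <= INR p) by (apply (le_INR 1); unfold p; lia).
  rewrite S_INR in *.
  set (Nn := INR p + 1) in *.
  set (iN := / Nn).
  assert (HiN : 0 < iN) by (apply Rinv_0_lt_compat; lra).
  assert (HiNm : iN <= / INR m) by (apply Rinv_le_contravar; lra).
  assert (L1 : ln Nn - ln (INR p) <= 2 * iN).
  { pose proof (ln_le_sub1 (Nn / INR p)). rewrite ln_div in H by lra.
    assert (Nn / INR p - 1 = / INR p) by (unfold Nn; field; lra).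
    assert (/ INR p <= 2 * iN). { unfold iN, Nn. apply (Rmult_le_reg_r (INR p * (INR p + 1))). nra.
      field_simplify; try lra. }
    assert (0 < Nn / INR p) by (apply Rdiv_lt_0_compat; lra). lra. }
  assert (L2 : 0 <= ln (c * INR m) - ln Nn <= iN).
  { split. assert (ln Nn <= ln (c * INR m)) by (apply ln_le; lra). lra.
    pose proof (ln_le_sub1 (c * INR m / Nn)). rewrite ln_div in H by lra.
    assert (c * INR m / Nn - 1 = (c * INR m - Nn) * iN) by (unfold iN; field; lra).
    assert ((c * INR m - Nn) * iN <= iN) by nra.
    assert (0 < c * INR m / Nn) by (apply Rdiv_lt_0_compat; lra). lra. }
  rewrite ln_mult in L2 by lra.
  set (e := / (c * d)). set (g := / d).
  assert (He : 0 < e < 1). { unfold e; split. apply Rinv_0_lt_compat; nra.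
    rewrite <- Rinv_1. apply Rinv_lt_contravar; nra. }
  assert (Hg : 0 < g < 1). { unfold g; split. apply Rinv_0_lt_compat; nra.
    rewrite <- Rinv_1. apply Rinv_lt_contravar; nra. }
  set (X := Hh p - ln (INR m) - ln c - euler_gamma).
  assert (HX : - 3 * iN <= X <= iN) by (unfold X; lra).
  assert (h1 : - 3 * iN <= e * X <= iN) by nra.
  assert (h2 : 0 <= g * (INR k + 1) * iN <= (INR k + 1) * iN).
  { pose proof (pos_INR k). assert (0 <= (INR k + 1) * iN) by nra.
    rewrite Rmult_assoc. split. apply Rmult_le_pos; nra. nra. }
  assert (Heq : e * Hh p + g * (INR k + 1) * (1 - iN) - psum (aa c d k) p -
     (e * (ln (INR m) + ln c + euler_gamma) + g * (INR k + 1) - (psum (aa c d k) p + T))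
     = e * X - g * (INR k + 1) * iN + T) by (unfold X; ring).
  rewrite Heq. apply Rabs_le.
  assert (2 / Nn = 2 * iN) by (unfold iN, Rdiv; ring).
  assert ((INR k + 6) * iN <= (INR k + 6) / INR m).
  { unfold Rdiv. apply Rmult_le_compat_l; [pose proof (pos_INR k); lra | auto]. }
  pose proof (pos_INR k). nra.
Qed.
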